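(* Let $S$ be a numerical semigroup, $D=S^*+S^*$, and $G=G(S)=(V,E)$. Among the vertices in $V\cap D$, every one of maximal length is nonloopy, i.e. if $u\in V\cap D$ has $\mathrm{len}(u)\ge \mathrm{len}(u')$ for all $u'\in V\cap D$, then $2u\notin X$.
   Context: A numerical semigroup is a subset $S\subseteq\mathbb N$ containing $0$, closed under addition, with finite complement; $S^*=S\setminus\{0\}$, $m=\min S^*$, $X=\{s\in S^*: s-m\notin S\}$. The graph $G(S)$ has edge set all subsets $\{x,y\}\subseteq X$ ($x=y$ allowed) with $x+y\in X$, and vertex set $V$ the endvertices of these edges; a vertex $x$ is loopy if $\{x,x\}$ is an edge, i.e. $2x\in X$. For $z\in S^*$, $\mathrm{len}(z)$ is the largest integer $t\ge1$ such that $z=x_1+\dots+x_t$ with all $x_i\in S^*$. *)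

(* Defs.v *)
From mathcomp Require Import all_boot.
Set Implicit Arguments. Unset Strict Implicit. Unset Printing Implicit Defensive.

Definition numerical_semigroup (S : nat -> Prop) : Prop :=
  [/\ S 0, (forall x y, S x -> S y -> S (x + y)) &
      exists N, forall n, N <= n -> S n].

Definition Sstar (S : nat -> Prop) (x : nat) : Prop := S x /\ 0 < x.

Definition is_multiplicity (S : nat -> Prop) (m : nat) : Prop :=
  Sstar S m /\ forall s, Sstar S s -> m <= s.

(* X = { s in S^* : s - m not in S } (integer subtraction: if s < m then s-m ∉ S) *)
Definition Xset (S : nat -> Prop) (m : nat) (s : nat) : Prop :=
  Sstar S s /\ ~ (m <= s /\ S (s - m)).

(* Vertex set of G(S): endpoints of edges {x,y} ⊆ X with x + y ∈ X (x = y allowed). *)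
Definition Vset (S : nat -> Prop) (m : nat) (x : nat) : Prop :=
  Xset S m x /\ exists y, Xset S m y /\ Xset S m (x + y).

Definition Dset (S : nat -> Prop) (z : nat) : Prop :=
  exists a b, Sstar S a /\ Sstar S b /\ z = a + b.

Definition decomposable (S : nat -> Prop) (z t : nat) : Prop :=
  exists s : seq nat, size s = t /\ (forall x, x \in s -> Sstar S x) /\ sumn s = z.

Definition is_len (S : nat -> Prop) (z t : nat) : Prop :=
  1 <= t /\ decomposable S z t /\ forall t', 1 <= t' -> decomposable S z t' -> t' <= t.

(* Main.v *)
Require Import Defs.
From Stdlib Require Import Classical Lia.
From mathcomp Require Import all_boot.
From mathcomp Require Import zify.

Lemma max_exists (P : nat -> Prop) (B : nat) :
  (forall t, P t -> t <= B) -> forall n t0, P t0 -> B - t0 <= n ->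
  exists t, P t /\ forall t', P t' -> t' <= t.
Proof.
move=> HB; elim=> [|n IH] t0 Pt0 Hn.
  exists t0; split=> // t' Pt'; have := HB _ Pt'; lia.
case: (classic (exists t', P t' /\ t0 < t')) => [[t' [Pt' lt]]|N].
  apply: (IH t' Pt'); have := HB _ Pt0; have := HB _ Pt'; lia.
exists t0; split=> // t' Pt'; rewrite leqNgt; apply/negP=> lt; apply: N; by exists t'.
Qed.

Lemma sumn_ge (S : nat -> Prop) (s : seq nat) :
  (forall x, x \in s -> Sstar S x) -> size s <= sumn s.
Proof.
elim: s => [|x s IH] //= H.
have [_ hx] := H x (mem_head _ _).
have : size s <= sumn s by apply: IH => y hy; apply: H; rewrite inE hy orbT.
move=> h; rewrite -addn1 addnC; apply: leq_add => //.
Qed.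

Lemma len_exists (S : nat -> Prop) z : Sstar S z -> exists t, is_len S z t.
Proof.
move=> Hz.
have HB : forall t, (1 <= t /\ decomposable S z t) -> t <= z.
  move=> t [_ [s [hs [hS hsum]]]]; rewrite -hs -hsum; exact: sumn_ge hS.
have P1 : 1 <= 1 /\ decomposable S z 1.
  split=> //; exists [:: z]; split=> //; split; last by rewrite /= addn0.
  by move=> x; rewrite inE => /eqP ->.
have [t [[h1 h2] h3]] := @max_exists _ z HB _ 1 P1 (leqnn _).
exists t; split=> //; split=> // t' a b; exact: h3.
Qed.

Theorem proposition4p10 (S : nat -> Prop) (m u : nat) :
  numerical_semigroup S ->
  is_multiplicity S m ->
  Vset S m u -> Dset S u ->
  (forall u' t t', Vset S m u' -> Dset S u' ->
     is_len S u t -> is_len S u' t' -> t' <= t) ->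
  ~ Xset S m (2 * u).
Proof.
move=> [S0 Sadd _] _ [[[Su _] _] _] [a [b [[Sa a0] [[Sb b0] ua]]]] Hmax X2.
have e2 : 2 * u = (u + a) + b by rewrite mul2n -addnn {2}ua addnA.
have [[S2 _] N2] := X2.
have Xua : Xset S m (u + a).
  have Sua0 : S (u + a) by exact: Sadd.
  split; first by split=> //; rewrite addn_gt0 a0 orbT.
  move=> [hm hS]; apply: N2; split; first by rewrite e2; apply: leq_trans hm (leq_addr _ _).
  have -> : 2 * u - m = (u + a - m) + b by lia.
  exact: Sadd.
have Xb : Xset S m b.
  split; first by [].
  move=> [hm hS]; apply: N2; split; first by rewrite e2; apply: leq_trans hm (leq_addl _ _).
  have -> : 2 * u - m = (b - m) + (u + a) by lia.
  exact: Sadd _ _ hS (Sadd _ _ Su Sa).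
have Vua : Vset S m (u + a) by split=> //; exists b; split=> //; rewrite -e2.
have Su' : Sstar S u by split=> //; rewrite ua addn_gt0 a0.
have Dua : Dset S (u + a) by exists u, a.
have Sua : Sstar S (u + a) by case: Xua.
have [t Lu] := @len_exists S u Su'.
have [t' Lua] := @len_exists S (u + a) Sua.
have le := Hmax _ t t' Vua Dua Lu Lua.
have [t1 [[s [hs [hS hsum]]] _]] := Lu.
have [_ [_ ht']] := Lua.
have : t.+1 <= t'.
  apply: ht' => //; exists (a :: s); split; first by rewrite /= hs.
  split; last by rewrite /= hsum addnC.
  move=> x; rewrite inE => /orP [/eqP ->|]; [by split | exact: hS].
by move=> h; have := leq_trans h le; rewrite ltnn.
Qed.
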